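(* Let $\Gamma$ be a 3-colex and $E=\prod_{\nu\in\Omega}Z_\nu$ a $Z$-type error on the 3D color code on $\Gamma$. Suppose that for each unordered pair $\{c,c'\}$ of distinct colors, $\mathsf E_{cc'}$ is a set of edges of $\Gamma^{*\setminus cc'}$ such that $\prod_{e\in\mathsf E_{cc'}}Z_e=\pi_{cc'}(E)\,S_{cc'}$ for some $Z$-stabilizer $S_{cc'}$ of the 3D toric code on $\Gamma^{*\setminus cc'}$. Then $\mathsf E=\sum_{\{c,c'\}}\mathsf E_{cc'}$ equals $\delta(E\overline S)$ for some $Z$-stabilizer $\overline S$ of the color code; that is, $\mathsf E$ estimates the edge boundary $\delta E$ up to the edge boundary of a $Z$-stabilizer of the color code.
   Context: Colors are $\{r,b,g,y\}$. A 3-colex $\Gamma$ is a 3-dimensional cell complex without boundary in which every vertex is 4-valent and lies in exactly four 3-cells, and whose 3-cells are properly 4-colored: every face lies in exactly two 3-cells, which have different colors. The dual complex $\Gamma^*$ has an $i$-cell for every $(3-i)$-cell of $\Gamma$, with incidences reversed; every 3-cell of $\Gamma^*$ is a tetrahedron. A vertex of $\Gamma^*$ is given the color of the corresponding 3-cell of $\Gamma$, so the four vertices of each tetrahedron have distinct colors. An edge of $\Gamma^*$ with endpoint colors $x,y$ is an $xy$-edge; each tetrahedron has exactly one $xy$-edge for each pair $x\ne y$. The 3D color code on $\Gamma$ has one qubit per tetrahedron $\nu$ of $\Gamma^*$, $X$-stabilizer generators $B^X_v=\prod_{\nu\ni v}X_\nu$ for vertices $v$ and $Z$-stabilizer generators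 $B^Z_e=\prod_{\nu\supset e}Z_\nu$ for edges $e$; $Z$-stabilizers are products of the $B^Z_e$. For distinct colors $c,c'$ let $\{d,d'\}$ be the remaining two colors. The minor complex $\Gamma^{*\setminus cc'}$ has as vertices the $d$- and $d'$-vertices of $\Gamma^*$, as edges the $dd'$-edges of $\Gamma^*$, one face $f_e$ for each $cc'$-edge $e$ of $\Gamma^*$ whose boundary $\partial f_e$ is the set of $dd'$-edges of the tetrahedra containing $e$ (these form a cycle), and one 3-cell for each vertex of color $c$ or $c'$. The 3D toric code on $\Gamma^{*\setminus cc'}$ has qubits on edges, $X$-checks $\prod_{e\ni v}X_e$ on vertices and $Z$-stabilizer generators $\prod_{t\in\partial f}Z_t$ for faces $f$; its $Z$-stabilizers are products of these. For a tetrahedron $\nu$, $\pi_{cc'}(\nu)$ is its unique $dd'$-edge, and $\pi_{cc'}(\prod_{\nu\in\Omega}Z_\nu)=\prod_{\nu\in\Omega}Z_{\pi_{cc'}(\nu)}$ (with $Z^2=I$); $\pi_{cc'}=\pi_{c'c}$. The edge boundary of a $Z$-operator $E=\prod_{\nu\in\Omega}Z_\nu$ is $\delta E=\sum_{\nu\in\Omega}\sum_{\{x,y\}}\pi_{xy}(\nu)$, the sum over the six unordered pairs of distinct colors (i.e. over the six edges of $\nu$), taken mod 2 as a set of edges of $\Gamma^*$. Sums of edge sets are mod-2 (symmetric difference). *)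

(* Defs.v *)
From HB Require Import structures.
From mathcomp Require Import all_boot.
Set Implicit Arguments. Unset Strict Implicit. Unset Printing Implicit Defensive.

Inductive color := r | b | g | y.

Definition color2o (c : color) : 'I_4 :=
  match c with r => inord 0 | b => inord 1 | g => inord 2 | y => inord 3 end.
Definition o2color (i : 'I_4) : color :=
  match val i with 0 => r | 1 => b | 2 => g | _ => y end.
Lemma color2oK : cancel color2o o2color.
Proof. by case; rewrite /o2color /= inordK. Qed.
HB.instance Definition _ := Finite.copy color (can_type color2oK).

(** An unordered pair {c,c'} of distinct colours is a 2-element set of colours;
    its complement ~: p is the pair {d,d'} of remaining colours. *)
Definition cpair (p : {set color}) : bool := #|p| == 2.

(** Combinatorial model of the dual complex Γ* of a 3-colex Γ:
    - vertices (dual to 3-cells of Γ), coloured;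
    - edges (dual to faces of Γ), each with two endpoints of different colours
      (every face of Γ lies in exactly two 3-cells of different colours);
    - triangles (dual to edges of Γ);
    - tetrahedra (dual to vertices of Γ, which are 4-valent and lie in four
      3-cells), with one vertex of each colour, one edge for each pair of
      colours and one triangle opposite to each colour;
    - every triangle lies in exactly two tetrahedra (every edge of Γ has
      exactly two endpoints: Γ has no boundary). *)
Record colex_dual := ColexDual {
  Vx : finType;
  Ed : finType;
  Tri : finType;
  Tet : finType;
  vcol : Vx -> color;
  eend : Ed -> {set Vx};
  tv : Tet -> color -> Vx;
  te : Tet -> {set color} -> Ed;
  tt : Tet -> color -> Tri;
  tv_col : forall t c, vcol (tv t c) = c;
  eend_two : forall e, #|eend e| = 2 /\ #|[set vcol v | v in eend e]| = 2;
  te_end : forall t p, cpair p -> eend (te t p) = [set tv t c | c in p];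
  tt_cons : forall t t' d d', tt t d = tt t' d' ->
     d = d' /\ (forall c, c != d -> tv t c = tv t' c)
            /\ (forall p, cpair p -> d \notin p -> te t p = te t' p);
  tri_two : forall T, #|[set t | [exists d, tt t d == T]]| = 2;
  vx_in_tet : forall v, exists t c, tv t c = v;
  ed_in_tet : forall e, exists t p, cpair p /\ te t p = e
}.

Section Ops.
Variable G : colex_dual.

Definition pedge (p : {set color}) (e : Ed G) : bool :=
  [set vcol v | v in eend e] == p.

Definition contains (t : Tet G) (e : Ed G) : bool :=
  [exists p, cpair p && (te t p == e)].

Definition symd (T : finType) (A B : {set T}) : {set T} :=
  (A :\: B) :|: (B :\: A).

(** Z-stabilizers of the colour code: products of B^Z_e = prod_{t ⊃ e} Z_t,
    i.e. mod-2 sums of the sets {t | t ⊃ e} over e in some set F of edges. *)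
Definition cc_zstab (S : {set Tet G}) : Prop :=
  exists F : {set Ed G},
    S = [set t | odd #|[set e in F | contains t e]|].

(** pi_{cc'}(prod_{t in Om} Z_t): mod-2 sum of the dd'-edges of the t in Om
    (p = {c,c'}, ~: p = {d,d'}). *)
Definition proj (p : {set color}) (Om : {set Tet G}) : {set Ed G} :=
  [set e | odd #|[set t in Om | te t (~: p) == e]|].

(** Boundary (mod 2) of the face f_e of the minor complex Γ^{*\cc'}
    associated with a cc'-edge e: the dd'-edges of the tetrahedra containing e. *)
Definition face_bd (p : {set color}) (e : Ed G) : {set Ed G} :=
  [set g | odd #|[set t | contains t e && (te t (~: p) == g)]|].

(** Z-stabilizers of the 3D toric code on the minor Γ^{*\cc'}:
    mod-2 sums of face boundaries of a set F of faces (= of cc'-edges). *)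
Definition tc_zstab (p : {set color}) (S : {set Ed G}) : Prop :=
  exists F : {set Ed G}, (forall e, e \in F -> pedge p e) /\
    S = [set g | odd #|[set e in F | g \in face_bd p e]|].

(** Edge boundary δ(prod_{t in Om} Z_t): mod-2 sum of all six edges of every t in Om. *)
Definition delta (Om : {set Tet G}) : {set Ed G} :=
  [set e | odd #|[set tp : Tet G * {set color} |
                   (tp.1 \in Om) && cpair tp.2 && (te tp.1 tp.2 == e)]|].

Definition sum_pairs (Ep : {set color} -> {set Ed G}) : {set Ed G} :=
  [set e | odd #|[set p | cpair p && (e \in Ep p)]|].

End Ops.

(* Main.v *)
Require Import Defs.
From mathcomp Require Import all_boot.
Set Implicit Arguments. Unset Strict Implicit. Unset Printing Implicit Defensive.

Lemma oddcard (T : finType) (A : {set T}) :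
  odd #|A| = \big[addb/false]_(x : T) (x \in A).
Proof.
rewrite -sum1_card (big_morph odd oddD (erefl : odd 0 = false)) big_mkcond /=.
by apply: eq_bigr => x _; case: (x \in A).
Qed.

Lemma andb_sumr (I : finType) b (F : I -> bool) :
  b && \big[addb/false]_i F i = \big[addb/false]_i (b && F i).
Proof. case: b => /=; [by apply: eq_bigr | by rewrite big1]. Qed.

Lemma andb_suml (I : finType) b (F : I -> bool) :
  (\big[addb/false]_i F i) && b = \big[addb/false]_i (F i && b).
Proof. rewrite andbC andb_sumr; apply: eq_bigr => i _; exact: andbC. Qed.

Lemma in_symd (T : finType) (A B : {set T}) x :
  (x \in symd A B) = (x \in A) (+) (x \in B).
Proof. by rewrite /symd !inE; case: (x \in A); case: (x \in B). Qed.

Lemma even_invol (T : finType) (s : T -> T) (A : {set T}) :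
  involutive s -> (forall x, s x != x) -> (forall x, (s x \in A) = (x \in A)) ->
  ~~ odd #|A|.
Proof.
move=> inv nf st; move: {2}#|A| (leqnn #|A|) => n.
elim: n A st => [|n IH] A st hA.
  by move: hA; rewrite leqn0 => /eqP ->.
case: (set_0Vmem A) => [-> | [x xA]]; first by rewrite cards0.
have sxA : s x \in A by rewrite st.
have nx := nf x.
rewrite (cardsD1 x) xA (cardsD1 (s x)) !inE nx sxA /=.
rewrite add0n negbK; apply: IH.
  move=> z; rewrite !inE st.
  have e1 : (s z == s x) = (z == x) := inj_eq (can_inj inv) z x.
  have e2 : (s z == x) = (z == s x).
    by apply/eqP/eqP => h; [rewrite -h inv | rewrite h inv].
  by rewrite e1 e2; case: (z == x); case: (z == s x).
move: hA; rewrite (cardsD1 x) xA (cardsD1 (s x)) !inE nx sxA.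
by rewrite !add1n ltnS => /ltnW.
Qed.

Lemma o2colorK : cancel o2color color2o.
Proof. by case=> [[|[|[|[|k]]]] Hi] //; apply: val_inj; rewrite /= inordK. Qed.
Lemma card_color : #|{: color}| = 4.
Proof. rewrite -(card_ord 4). exact: (bij_eq_card (Bijective color2oK o2colorK)). Qed.

Lemma cpairC p : cpair (~: p) = cpair p.
Proof.
rewrite /cpair; have := cardsC p; rewrite card_color => h.
have -> : #|~: p| = 4 - #|p| by rewrite -h addKn.
by case: #|p| => [|[|[|[|[|k]]]]].
Qed.

Section Geo.
Variable G : colex_dual.

Definition sig (x : color) (t : Tet G) : Tet G :=
  odflt t [pick t' | (t' != t) && [exists d, tt t' d == tt t x]].

Lemma sig_spec x t : (sig x t != t) /\ tt (sig x t) x = tt t x.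
Proof.
rewrite /sig; case: pickP => [t' /andP[ne /existsP[d /eqP e]] | none] /=.
  by have [dx _] := tt_cons e; split; [done|rewrite dx in e].
exfalso.
have := tri_two (tt t x).
rewrite (cardsD1 t) inE; have -> : [exists d, tt t d == tt t x].
  by apply/existsP; exists x.
move=> /eqP; rewrite add1n eqSS => /eqP h.
have [u] : exists u, u \in [set t0 | [exists d, tt t0 d == tt t x]] :\ t.
  by apply/set0Pn; rewrite -card_gt0 h.
by rewrite !inE none.
Qed.

Lemma sig_inv x : involutive (sig x).
Proof.
move=> t; have [ne1 e1] := sig_spec x t; have [ne2 e2] := sig_spec x (sig x t).
apply/eqP; apply/negPn/negP => ne3.
have := tri_two (tt t x).
set A := [set _ | _].
have inA u : tt u x = tt t x -> u \in A by move=> h; rewrite inE; apply/existsP; exists x; rewrite h.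
rewrite (cardsD1 t) (inA t) // (cardsD1 (sig x t)) in_setD1 ne1 (inA (sig x t)) //.
rewrite (cardsD1 (sig x (sig x t))) !in_setD1 ne2 ne3 (inA _) ?e2 //.
Qed.

Lemma te_sig x (t : Tet G) q : cpair q -> x \notin q -> te (sig x t) q = te t q.
Proof.
move=> cq xq; have [_ e] := sig_spec x t.
by have [_ [_ h]] := tt_cons e; apply: h.
Qed.

Lemma colors_te (t : Tet G) q : cpair q -> [set @vcol G v | v in eend (te t q)] = q.
Proof.
move=> cq; rewrite te_end //; apply/setP => c.
apply/imsetP/idP => [[v /imsetP[c' Hc' ->] ->] | Hc]; first by rewrite tv_col.
by exists (tv t c); [apply/imsetP; exists c | rewrite tv_col].
Qed.

Lemma contains_pedge (t : Tet G) e p : cpair p -> pedge p e -> contains t e = (te t p == e).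
Proof.
move=> cp pe; apply/existsP/eqP => [[q /andP[cq /eqP E]] | E].
  move: pe; rewrite /pedge -E colors_te // => /eqP qp.
  by rewrite -qp.
by exists p; rewrite cp E eqxx.
Qed.

Lemma other_color p q : cpair p -> cpair q -> q != ~: p ->
  exists2 x, x \in ~: p & x \notin q.
Proof.
move=> cp cq nq; case: (boolP (~: p \subset q)) => [sub | /subsetPn [x h1 h2]].
  exfalso; move/negP: nq; apply; apply/eqP; apply/esym/eqP.
  by rewrite eqEcard sub; move: cq cp; rewrite -(cpairC p) /cpair => /eqP -> /eqP ->.
by exists x.
Qed.

Lemma parity e p q g : cpair p -> pedge p e -> cpair q -> q != ~: p ->
  ~~ odd #|[set t : Tet G | contains t e && (te t q == g)]|.
Proof.
move=> cp pe cq nq; have [x xp xq] := other_color cp cq nq.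
have xp' : x \notin p by rewrite inE in xp.
apply: (even_invol (s := sig x)); first exact: sig_inv.
  by move=> t; have [] := sig_spec x t.
move=> t; rewrite !inE !(contains_pedge _ cp pe) te_sig // te_sig //.
Qed.

Lemma keyY e p g : cpair p -> pedge p e ->
  \big[addb/false]_q (cpair q && odd #|[set t : Tet G | contains t e && (te t q == g)]|)
  = odd #|[set t : Tet G | contains t e && (te t (~: p) == g)]|.
Proof.
move=> cp pe; rewrite (bigD1 (~: p)) //= cpairC cp /= big1; first by rewrite addbF.
move=> q nq; case cq: (cpair q) => //=; apply/negbTE; exact: (parity g cp pe cq nq).
Qed.

End Geo.

Theorem theorem4 (G : colex_dual) (Om : {set Tet G})
    (Ecc : {set color} -> {set Ed G}) :
  (forall p, cpair p ->
     (forall e, e \in Ecc p -> pedge (~: p) e) /\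
     exists S, tc_zstab p S /\ Ecc p = symd (proj p Om) S) ->
  exists Sbar, cc_zstab Sbar /\ sum_pairs Ecc = delta (symd Om Sbar).
Proof.
move=> H.
pose P p (F : {set Ed G}) := [forall e, (e \in F) ==> pedge p e] &&
  (Ecc p == symd (proj p Om) [set g | odd #|[set e in F | g \in face_bd p e]|]).
pose Fp p := odflt set0 [pick F | P p F].
have HFp p : cpair p -> P p (Fp p).
  move=> cp; rewrite /Fp; case: pickP => [F //|none]; exfalso.
  have [_ [S [[F [HF ES]] E]]] := H p cp.
  move: (none F); rewrite /P E ES eqxx andbT => /negP; apply.
  by apply/forallP => e; apply/implyP; exact: HF.
pose F := [set e | odd #|[set p | cpair p && (e \in Fp p)]|].
exists [set t | odd #|[set e in F | contains t e]|]; split; first by exists F.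
apply/setP => g; rewrite !inE !oddcard.
pose W q e := odd #|[set t : Tet G | contains t e && (te t q == g)]|.
pose A p := cpair p && odd #|[set t in Om | te t (~: p) == g]|.
pose B p := \big[addb/false]_e (cpair p && (e \in Fp p) && W (~: p) e).
have E1 : \big[addb/false]_p (p \in [set p | cpair p & g \in Ecc p])
   = \big[addb/false]_p A p (+) \big[addb/false]_p B p.
  transitivity (\big[addb/false]_p (A p (+) B p)); last by rewrite big_split.
  apply eq_bigr => p _; rewrite inE /A /B.
  case cp: (cpair p) => /=; last by rewrite big1.
  have /andP[_ /eqP->] := HFp p cp.
  rewrite in_symd !inE oddcard; congr (_ (+) _); rewrite oddcard; apply: eq_bigr => e _.
  by rewrite !inE.
pose Sb := [set t | odd #|[set e in F | contains t e]|].
rewrite E1 -/Sb.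
rewrite [RHS](_ : _ = \big[addb/false]_(t : Tet G) \big[addb/false]_(q : {set color})
   ((t \in symd Om Sb) && cpair q && (te t q == g))); last first.
  by rewrite pair_bigA /=; apply: eq_bigr => tp _; rewrite inE.
rewrite [RHS](_ : _ = \big[addb/false]_(t : Tet G) \big[addb/false]_(q : {set color})
   ((t \in Om) && cpair q && (te t q == g)) (+) \big[addb/false]_(t : Tet G) \big[addb/false]_(q : {set color})
   ((t \in Sb) && cpair q && (te t q == g))); last first.
  rewrite -big_split /=; apply: eq_bigr => t _; rewrite -big_split /=; apply: eq_bigr => q _.
  by rewrite in_symd !andb_addl.
congr (_ (+) _).
  rewrite exchange_big /= (reindex_inj (@setC_inj _)) /=.
  apply: eq_bigr => q _; rewrite /A cpairC setCK oddcard andb_sumr.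
  by apply: eq_bigr => t _; rewrite inE; case: (t \in Om); case: (cpair q).
transitivity (\big[addb/false]_e ((e \in F) && \big[addb/false]_q (cpair q && W q e))).
  rewrite (eq_bigr (fun p => \big[addb/false]_e ((cpair p && (e \in Fp p)) &&
             \big[addb/false]_q (cpair q && W q e)))); last first.
    move=> p _; apply: eq_bigr => e _; case cp: (cpair p) => //=.
    case eF: (e \in Fp p) => //=.
    have /andP[/forallP/(_ e) /implyP /(_ eF) pe _] := HFp p cp.
    by rewrite /W (keyY g cp pe).
  rewrite exchange_big /=; apply: eq_bigr => e _; rewrite -andb_suml; congr (_ && _).
  by rewrite inE oddcard; apply: eq_bigr => p _; rewrite inE.
rewrite (eq_bigr (fun t => \big[addb/false]_(q : {set color}) \big[addb/false]_e
      (((e \in F) && contains t e) && cpair q && (te t q == g)))); last first.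
  move=> t _; apply: eq_bigr => q _; rewrite inE oddcard !andb_suml.
  by apply: eq_bigr => e _; rewrite inE.
rewrite (eq_bigr (fun t => \big[addb/false]_e \big[addb/false]_(q : {set color})
      (((e \in F) && contains t e) && cpair q && (te t q == g)))); last first.
  by move=> t _; rewrite exchange_big.
rewrite exchange_big /=; apply: eq_bigr => e _.
rewrite andb_sumr exchange_big /=; apply: eq_bigr => q _.
rewrite /W oddcard !andb_sumr; apply: eq_bigr => t _; rewrite inE.
by case: (e \in F); case: (cpair q); case: (contains t e).
Qed.
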